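(* Let $(k_n)_{n\ge1}$ be positive with $\sum_{j\ge1}k_j\le1$, let $a=-\sum_{j\ge1}k_j$, $\lambda_n=\sum_{j\ge n}k_j$ for $n\ge1$ and $\lambda_0:=1$, and suppose $\lambda_n^2\le\lambda_{n-1}\lambda_{n+1}$ for all $n\ge1$. Let $r$ be the discrete resolvent. Then $\Delta_n:=r_{n-1}-r_n$ ($n\ge1$) satisfies $\Delta_n=\lambda_n-\sum_{j=1}^{n-1}\lambda_{n-j}\Delta_j$, $\Delta_n\ge0$ for all $n\ge1$, so $(r_n)_{n\ge0}$ is non-increasing.
   Context: The discrete resolvent $r=(r_n)_{n\ge0}$ is the unique solution of $r_{n+1}-r_n=ar_n+\sum_{j=1}^nk_jr_{n-j}$ for $n\ge0$, $r_0=1$. *)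

(* Defs.v *)
From Stdlib Require Import Reals Lra Lia.
Open Scope R_scope.

Fixpoint sum1 (n : nat) (f : nat -> R) : R :=
  match n with
  | O => 0
  | S m => sum1 m f + f (S m)
  end.

Definition is_discrete_resolvent (a : R) (k : nat -> R) (r : nat -> R) : Prop :=
  r O = 1 /\
  forall n : nat, r (S n) - r n = a * r n + sum1 n (fun j => k j * r (n - j)%nat).

Definition resDelta (r : nat -> R) (n : nat) : R := r (n - 1)%nat - r n.

(* Main.v *)
Require Import Defs.
From Stdlib Require Import Reals Lra Lia.
Open Scope R_scope.

Lemma is_shift f g l : (forall i, g i = f (S i)) -> infinite_sum f l -> infinite_sum g (l - f O).
Proof.
  intros Hg H eps Heps. destruct (H eps Heps) as [N HN]. exists N. intros n Hn.
  assert (E : sum_f_R0 g n = sum_f_R0 f (S n) - f O).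
  { rewrite (decomp_sum f (S n)) by lia. simpl pred.
    rewrite (sum_eq g (fun i => f (S i)) n) by (intros; apply Hg). ring. }
  rewrite E. specialize (HN (S n) ltac:(lia)). unfold R_dist in *.
  replace (sum_f_R0 f (S n) - f 0%nat - (l - f 0%nat)) with (sum_f_R0 f (S n) - l) by ring. exact HN.
Qed.

Lemma is_nonneg f l : (forall i, 0 <= f i) -> infinite_sum f l -> 0 <= l.
Proof.
  intros Hf H. apply (@Rle_cv_lim (fun _ => 0) (fun N => sum_f_R0 f N) 0 l); auto.
  - intros; apply cond_pos_sum; auto.
  - intros eps Heps. exists O. intros. unfold R_dist. rewrite Rminus_diag, Rabs_R0. lra.
Qed.

Lemma sum1_ext n f g : (forall j, (1 <= j <= n)%nat -> f j = g j) -> sum1 n f = sum1 n g.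
Proof.
  induction n; intros H; simpl; auto.
  rewrite IHn by (intros; apply H; lia). rewrite (H (S n)) by lia. reflexivity.
Qed.

Lemma sum1_minus n f g : sum1 n (fun j => f j - g j) = sum1 n f - sum1 n g.
Proof. induction n; simpl; [ring|rewrite IHn; ring]. Qed.

Lemma sum1_scal n c f : sum1 n (fun j => c * f j) = c * sum1 n f.
Proof. induction n; simpl; [ring|rewrite IHn; ring]. Qed.

Lemma sum1_nonneg n f : (forall j, (1 <= j <= n)%nat -> 0 <= f j) -> 0 <= sum1 n f.
Proof.
  induction n; intros H; simpl; [lra|].
  assert (0 <= sum1 n f) by (apply IHn; intros; apply H; lia).
  assert (0 <= f (S n)) by (apply H; lia). lra.
Qed.

Lemma sum1_S n f : sum1 (S n) f = sum1 n f + f (S n).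
Proof. reflexivity. Qed.

Lemma sum1_shift m f : sum1 (S m) f = f 1%nat + sum1 m (fun j => f (S j)).
Proof.
  induction m; simpl; [ring|]. simpl in IHm. rewrite IHm. ring.
Qed.

Lemma sum1_refl m g : sum1 m (fun j => g (S m - j)%nat) = sum1 m g.
Proof.
  induction m; [reflexivity|].
  rewrite sum1_shift. change (g (S m) + sum1 m (fun j => g (S m - j)%nat) = sum1 (S m) g).
  rewrite IHm. simpl. ring.
Qed.

Theorem mainTheorem10
  (k : nat -> R) (K a : R) (lam : nat -> R) (r : nat -> R)
  (hkpos : forall j : nat, (1 <= j)%nat -> 0 < k j)
  (hK : infinite_sum (fun i => k (S i)) K)
  (hK1 : K <= 1)
  (ha : a = - K)
  (hlam0 : lam O = 1)
  (hlam : forall n : nat, (1 <= n)%nat -> infinite_sum (fun i => k (n + i)%nat) (lam n))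
  (hlogconv : forall n : nat, (1 <= n)%nat -> lam n ^ 2 <= lam (n - 1)%nat * lam (S n))
  (hr : is_discrete_resolvent a k r) :
  (forall n : nat, (1 <= n)%nat ->
     resDelta r n = lam n - sum1 (n - 1) (fun j => lam (n - j)%nat * resDelta r j)) /\
  (forall n : nat, (1 <= n)%nat -> 0 <= resDelta r n) /\
  (forall n : nat, r (S n) <= r n).
Proof.
  destruct hr as [hr0 hrS].
  assert (hkrec : forall n, (1 <= n)%nat -> k n = lam n - lam (S n)).
  { intros n Hn.
    assert (H1 := is_shift (fun i => k (n + i)%nat) (fun i => k (S n + i)%nat) (lam n)
              ltac:(intros i; cbv beta; f_equal; lia) (hlam n Hn)).
    assert (H2 := uniqueness_sum _ _ _ H1 (hlam (S n) ltac:(lia))).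
    cbv beta in H2. rewrite Nat.add_0_r in H2. lra. }
  assert (hlampos : forall n, 0 < lam n).
  { intros [|n]; [lra|].
    assert (0 <= lam (S (S n))).
    { apply (is_nonneg (fun i => k (S (S n) + i)%nat)); [|apply hlam; lia].
      intros i; left; apply hkpos; lia. }
    assert (0 < k (S n)) by (apply hkpos; lia).
    rewrite (hkrec (S n)) in H0 by lia. lra. }
  assert (hKl : K = lam 1%nat) by exact (uniqueness_sum _ _ _ hK (hlam 1%nat ltac:(lia))).
  assert (hratio : forall m d, lam (S m) * lam (m + d)%nat <= lam (S (m + d)) * lam m).
  { intros m d. induction d.
    - rewrite Nat.add_0_r. lra.
    - rewrite Nat.add_succ_r.
      assert (Hl := hlogconv (S (m + d)) ltac:(lia)).
      replace (S (m + d) - 1)%nat with (m + d)%nat in Hl by lia.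
      assert (Hx := hlampos (m + d)%nat). assert (Hy := hlampos (S (m + d))).
      assert (Hz := hlampos m). assert (Hw := hlampos (S m)).
      apply (Rmult_le_reg_l (lam (m + d)%nat)); [lra|].
      apply Rle_trans with (lam (S (m + d)) ^ 2 * lam m).
      + assert (lam (S m) * lam (m+d)%nat * lam (S (m+d)) <= lam (S (m + d)) * lam m * lam (S (m+d))).
        { apply Rmult_le_compat_r; lra. }
        simpl. nra.
      + assert (lam (S (m + d)) ^ 2 * lam m <= lam (m + d)%nat * lam (S (S (m + d))) * lam m).
        { apply Rmult_le_compat_r; lra. }
        lra. }
  assert (Iden : forall m, resDelta r (S m) = lam (S m) - sum1 m (fun j => lam (S m - j)%nat * resDelta r j)).
  { intros m.
    assert (Ea : resDelta r (S m) = lam 1%nat * r m - sum1 m (fun j => k j * r (m - j)%nat)).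
    { unfold resDelta. replace (S m - 1)%nat with m by lia. rewrite <- hKl.
      specialize (hrS m). rewrite ha in hrS. lra. }
    assert (Eb : sum1 m (fun j => k j * r (m - j)%nat) =
                 sum1 m (fun j => lam j * r (m - j)%nat) - sum1 m (fun j => lam (S j) * r (m - j)%nat)).
    { rewrite <- sum1_minus. apply sum1_ext. intros j Hj. rewrite hkrec by lia. ring. }
    assert (Ec : sum1 (S m) (fun j => lam j * r (S m - j)%nat) =
                 lam 1%nat * r m + sum1 m (fun j => lam (S j) * r (m - j)%nat)).
    { rewrite sum1_shift. replace (S m - 1)%nat with m by lia. reflexivity. }
    assert (Ed : sum1 m (fun j => lam (S m - j)%nat * resDelta r j) =
                 sum1 m (fun j => lam j * r (m - j)%nat) - sum1 m (fun j => lam j * r (S m - j)%nat)).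
    { rewrite <- sum1_minus.
      rewrite <- (sum1_refl m (fun j => lam j * r (m - j)%nat - lam j * r (S m - j)%nat)).
      apply sum1_ext. intros j Hj. unfold resDelta.
      replace (S m - (S m - j))%nat with j by lia.
      replace (m - (S m - j))%nat with (j - 1)%nat by lia. ring. }
    assert (Ee : sum1 (S m) (fun j => lam j * r (S m - j)%nat) =
                 sum1 m (fun j => lam j * r (S m - j)%nat) + lam (S m)).
    { transitivity (sum1 m (fun j => lam j * r (S m - j)%nat) + lam (S m) * r (S m - S m)%nat); [reflexivity|]. rewrite Nat.sub_diag, hr0. ring. }
    rewrite Ed, Ea, Eb. lra. }
  assert (Iden2 : forall n, (1 <= n)%nat -> lam n = sum1 n (fun j => lam (n - j)%nat * resDelta r j)).
  { intros [|m] Hm; [lia|]. rewrite sum1_S. rewrite Nat.sub_diag, hlam0.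
    rewrite (Iden m). ring. }
  assert (Pos : forall n j, (1 <= j <= n)%nat -> 0 <= resDelta r j).
  { induction n; intros j Hj; [lia|].
    destruct (Nat.eq_dec j (S n)) as [->|Hne]; [|apply IHn; lia].
    destruct (Nat.eq_dec n 0) as [->|Hn0].
    - rewrite (Iden 0%nat). simpl. assert (H := hlampos 1%nat). lra.
    - assert (E : lam n * resDelta r (S n) =
        sum1 n (fun j => resDelta r j * (lam (S n) * lam (n - j)%nat - lam n * lam (S n - j)%nat))).
      { rewrite (Iden n).
        rewrite (sum1_ext n (fun j => resDelta r j * (lam (S n) * lam (n - j)%nat - lam n * lam (S n - j)%nat))
          (fun j => lam (S n) * (lam (n - j)%nat * resDelta r j) - lam n * (lam (S n - j)%nat * resDelta r j)))
          by (intros; ring).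
        rewrite sum1_minus, !sum1_scal, <- Iden2 by lia. ring. }
      assert (0 <= lam n * resDelta r (S n)).
      { rewrite E. apply sum1_nonneg. intros j Hj'.
        apply Rmult_le_pos; [apply IHn; lia|].
        assert (H := hratio (n - j)%nat j).
        replace (n - j + j)%nat with n in H by lia.
        replace (S n - j)%nat with (S (n - j)) by lia. lra. }
      assert (Hp := hlampos n). nra. }
  split; [|split].
  - intros [|m] Hm; [lia|]. replace (S m - 1)%nat with m by lia. apply Iden.
  - intros n Hn. apply (Pos n); lia.
  - intros n. assert (H := Pos (S n) (S n) ltac:(lia)). unfold resDelta in H.
    replace (S n - 1)%nat with n in H by lia. lra.
Qed.
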